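(* Let $q$ be odd and $c\in{\mathbb F}_q$. Then $$\prod\{c-a: a\in\mathcal B_2^{--}\}=\begin{cases}2&c=2,\\ \left(\frac2q\right)2 & c=-2,\\ \sqrt{c+2}& c\in\mathcal B_2^{-+},\\ -\left(\frac2q\right)\sqrt{2-c}& c\in\mathcal B_2^{+-},\\ 2 & c\in\mathcal B_2^{++}\text{ and }\sqrt{c+2}\in\mathcal B_2^{++},\\ -2& c\in\mathcal B_2^{++}\text{ and }\sqrt{c+2}\notin\mathcal B_2^{++},\\ 0& c\in\mathcal B_2^{--},\end{cases}$$ where in the third case $\sqrt{c+2}$ is chosen so that $\sqrt{c+2}+2$ is a square, and in the fourth case $\sqrt{2-c}$ is chosen so that $\sqrt{2-c}+2$ is a nonsquare. Moreover, if $c\in\mathcal B_2^{++}$ then the two square roots $\pm\sqrt{c+2}$ either both lie in $\mathcal B_2^{++}$ or both lie in $\mathcal B_2^{--}$.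
   Context: $\left(\frac{a}{q}\right)$ is the Legendre symbol on ${\mathbb F}_q$. For $\varepsilon_1,\varepsilon_2\in\{1,-1\}$ (written $+,-$), $\mathcal B_2^{\varepsilon_1,\varepsilon_2}=\{b\in{\mathbb F}_q:\left(\frac{2-b}{q}\right)=\varepsilon_1,\ \left(\frac{2+b}{q}\right)=\varepsilon_2\}$. Note ${\mathbb F}_q=\{2,-2\}\sqcup\bigsqcup_{\varepsilon_1,\varepsilon_2}\mathcal B_2^{\varepsilon_1,\varepsilon_2}$. *)

(* Defs.v *)
From HB Require Import structures.
From mathcomp Require Import all_boot all_order all_algebra all_field.
Set Implicit Arguments. Unset Strict Implicit. Unset Printing Implicit Defensive.
Import Order.TTheory GRing.Theory Num.Theory.
Local Open Scope ring_scope.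

Definition legendre (F : finFieldType) (a : F) : int :=
  if a == 0 then 0 else if [exists b : F, b ^+ 2 == a] then 1 else -1.

Definition B2 (F : finFieldType) (e1 e2 : int) : {set F} :=
  [set b : F | (legendre (2 - b) == e1) && (legendre (2 + b) == e2)].

(* Main.v *)
Require Import Defs.
From HB Require Import structures.
From mathcomp Require Import all_boot all_order all_algebra all_field.
From mathcomp Require Import ring zify.
Set Implicit Arguments. Unset Strict Implicit. Unset Printing Implicit Defensive.
Import Order.TTheory GRing.Theory Num.Theory.
Local Open Scope ring_scope.

Section S.
Variable F : finFieldType.
Hypothesis hodd : odd #|F|.
Local Notation q := #|F|.
Local Notation m := (#|F|./2).

Lemma two_neq0 : (2 : F) != 0.
Proof.
apply/negP => /eqP h2.
have c2 : 2 \in [pchar F] by rewrite inE /= h2 eqxx.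
have h := card_pprimeChar c2.
have hF : #|F| = #|pPrimeCharType c2| by [].
have g1 := finNzRing_gt1 F.
move: hodd g1; rewrite hF h.
by case: (logn _ _) => [|n] //=; rewrite oddX.
Qed.

Lemma card_eq : q = ((m * 2)%N).+1.
Proof. by rewrite -{1}(odd_double_half q) hodd muln2. Qed.

Lemma expm2 (x : F) : x != 0 -> (x ^+ m) ^+ 2 = 1.
Proof.
move=> x0; rewrite -exprM; apply: (mulIf x0); rewrite mul1r -exprSr -card_eq.
exact: expf_card.
Qed.

Lemma expm_pm1 (x : F) : x != 0 -> x ^+ m = 1 \/ x ^+ m = -1.
Proof.
by move/expm2/eqP; rewrite sqrf_eq1 => /orP[] /eqP; [left|right].
Qed.

Lemma sq_expm (x b : F) : b ^+ 2 = x -> x != 0 -> x ^+ m = 1.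
Proof.
move=> <- b0; rewrite -exprM mulnC exprM expm2 //.
by apply: contraNneq b0 => /eqP; rewrite expf_eq0 /=.
Qed.

Lemma expm_sq (x : F) : x ^+ m = 1 -> exists b, b ^+ 2 = x.
Proof.
move=> hx.
have hd : ('X^2 - x%:P) %| \prod_(y : F) ('X - y%:P).
  rewrite -finField_genPoly card_eq.
  have -> : ('X^((#|F|./2 * 2)%N.+1) - 'X : {poly F}) =
            'X * (('X ^+ 2) ^+ m - (x%:P) ^+ m).
    by rewrite -rmorphXn /= hx mulrBr mulr1 -exprM (mulnC 2) -exprS.
  by rewrite subrXX dvdp_mull // dvdp_mulr.
have [s hs] := dvdp_prod_XsubC hd.
move: hs; case: (mask s (index_enum F)) => [|y r].
  rewrite big_nil => /eqp_size; rewrite size_polyC oner_eq0.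
  by rewrite size_addl size_polyXn // size_polyN size_polyC; case: (x == 0).
rewrite big_cons => hs.
have : ('X - y%:P) %| ('X^2 - x%:P).
  by rewrite (eqp_dvdr _ hs) dvdp_mulr.
rewrite dvdp_XsubCl rootE !hornerE => /eqP h; exists y; apply/eqP.
by rewrite -subr_eq0 h.
Qed.

Lemma m_gt0 : (0 < m)%N.
Proof.
have := finNzRing_gt1 F; rewrite card_eq; case: (#|F|./2) => //.
Qed.

Lemma legE (x : F) : ((legendre x)%:~R : F) = x ^+ m.
Proof.
rewrite /legendre; have [->|x0] := eqVneq x 0.
  by rewrite expr0n eqn0Ngt m_gt0.
case: existsP => [[b /eqP hb]|hn]; first by rewrite (sq_expm hb x0).
have [h|h] := expm_pm1 x0; last by rewrite h.
by case: hn; have [b hb] := expm_sq h; exists b; rewrite hb.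
Qed.

Lemma leg_cases (x : F) : [\/ legendre x = 0, legendre x = 1 | legendre x = -1].
Proof.
by rewrite /legendre; case: ifP => _; [constructor 1|case: ifP => _; [constructor 2|constructor 3]].
Qed.

Lemma one_neq_m1 : (1 : F) != -1.
Proof.
apply: contra_neq two_neq0 => h.
by rewrite mulr2n {2}h addrN.
Qed.

Lemma leg1 (x : F) : (legendre x = 1) <-> (x ^+ m = 1).
Proof.
split=> [h|h]; first by rewrite -legE h.
case: (leg_cases x) => // h'; move: h; rewrite -legE h' /=.
  by move/eqP; rewrite eq_sym oner_eq0.
by move/eqP; rewrite eq_sym (negPf one_neq_m1).
Qed.

Lemma legm1 (x : F) : (legendre x = -1) <-> (x ^+ m = -1).
Proof.
split=> [h|h]; first by rewrite -legE h.
case: (leg_cases x) => // h'; move: h; rewrite -legE h' /=.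
  by move/eqP; rewrite eq_sym oppr_eq0 oner_eq0.
by move/eqP; rewrite (negPf one_neq_m1).
Qed.

Lemma leg0 (x : F) : (legendre x = 0) <-> (x = 0).
Proof.
split=> [h|->]; last by rewrite /legendre eqxx.
by move: h; rewrite /legendre; case: eqP => //; case: ifP.
Qed.

Definition Nsq : {set F} := [set n | legendre n == -1].
Definition Qsq : {set F} := [set n | legendre n == 1].

Lemma prod_nsq : \prod_(n in Nsq) ('X - n%:P) = 'X^m + 1.
Proof.
have hQ : exists u, 'X^m - 1 = u * \prod_(x in Qsq) ('X - x%:P).
  rewrite -big_enum; apply: uniq_roots_prod_XsubC; last first.
    by rewrite uniq_rootsE enum_uniq.
  apply/allP => x; rewrite mem_enum inE => /eqP/leg1 h.
  by rewrite rootE !hornerE h subrr.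
have hN : exists v, 'X^m + 1 = v * \prod_(x in Nsq) ('X - x%:P).
  rewrite -big_enum; apply: uniq_roots_prod_XsubC; last first.
    by rewrite uniq_rootsE enum_uniq.
  apply/allP => x; rewrite mem_enum inE => /eqP/legm1 h.
  by rewrite rootE !hornerE h addNr.
have [u hu] := hQ; have [v hv] := hN.
have hall : 'X^#|F| - 'X = 'X * (\prod_(x in Qsq) ('X - x%:P)) *
                               (\prod_(x in Nsq) ('X - x%:P)) :> {poly F}.
  rewrite finField_genPoly (bigD1 0) //= subr0 -mulrA; congr (_ * _).
  rewrite (bigID (fun x => legendre x == 1)) /=; congr (_ * _); apply: eq_bigl => x.
    rewrite inE; case: eqP => [->|]; first by rewrite /legendre eqxx.
    by [].
  rewrite inE; case: (leg_cases x) => h; rewrite h /=.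
  - by move/leg0: h => ->; rewrite eqxx.
  - by rewrite andbF.
  rewrite andbT; case: eqP => // hx0; move: h; rewrite hx0 => /legm1.
  by rewrite expr0n eqn0Ngt m_gt0 /= => /eqP; rewrite eq_sym oppr_eq0 oner_eq0.
have hX : 'X^#|F| - 'X = 'X * ('X^m - 1) * ('X^m + 1) :> {poly F}.
  rewrite {1}card_eq exprS exprM; set t := 'X^m; ring.
have nzQ : \prod_(x in Qsq) ('X - x%:P) != 0 :> {poly F}.
  exact/monic_neq0/monic_prod_XsubC.
have nzN : \prod_(x in Nsq) ('X - x%:P) != 0 :> {poly F}.
  exact/monic_neq0/monic_prod_XsubC.
have huv : u * v = 1.
  move: hX; rewrite hall hu hv => /eqP.
  rewrite -subr_eq0 => /eqP h.
  have : 'X * (\prod_(x in Qsq) ('X - x%:P)) * (\prod_(x in Nsq) ('X - x%:P)) *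
         (1 - u * v) = 0.
    by rewrite -[RHS]h; ring.
  move/eqP; rewrite !mulf_eq0 (negPf nzQ) (negPf nzN) polyX_eq0 /= subr_eq0.
  by move/eqP->.
have : size v == 1%N.
  have hu0 : u != 0 by apply: contra_eq_neq huv => ->; rewrite mul0r eq_sym oner_eq0.
  have hv0 : v != 0 by apply: contra_eq_neq huv => ->; rewrite mulr0 eq_sym oner_eq0.
  have := size_mul hu0 hv0; rewrite huv size_poly1.
  move: (size_poly_gt0 u) (size_poly_gt0 v); rewrite hu0 hv0.
  by case: (size u) => // [[|a]] //; case: (size v) => // [[|b]] //= _ _; rewrite addnS.
case/size_poly1P => c c0 hc.
have : lead_coef ('X^m + 1 : {poly F}) = c.
  by rewrite hv hc lead_coefM lead_coefC (monicP (monic_prod_XsubC _ _ _)) mulr1.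
rewrite -polyC1 (monicP (monicXnaddC _ m_gt0)) => c1.
by rewrite hv hc -c1 mul1r.
Qed.

Lemma frobXC (c : F) : ('X + c%:P) ^+ #|F| = 'X^#|F| + c%:P.
Proof.
have h := congr1 (comp_poly ('X + c%:P)) (finField_genPoly F).
rewrite /= comp_polyB comp_polyX rmorphXn /= comp_polyX rmorph_prod /= in h.
have h2 : \prod_(i : F) (('X - i%:P) \Po ('X + c%:P)) = 'X^#|F| - 'X.
  rewrite finField_genPoly [RHS](reindex_inj (subIr c)) /=.
  by apply: eq_bigr => x _; rewrite comp_polyB comp_polyX comp_polyC polyCB; ring.
rewrite h2 in h; apply/eqP; rewrite -subr_eq0 -(subrr ('X^#|F| - 'X)).
by rewrite -{1}h; apply/eqP; ring.
Qed.

Lemma leg_sq (b : F) : b != 0 -> legendre (b ^+ 2) = 1.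
Proof. by move=> b0; apply/leg1; apply: (sq_expm (erefl _)); rewrite expf_neq0. Qed.

Lemma four_eq : (4 : F) = 2 ^+ 2.
Proof. by rewrite expr2 -natrM. Qed.

Lemma four_neq0 : (4 : F) != 0.
Proof. by rewrite four_eq expf_neq0 // two_neq0. Qed.

Definition SS := B2 F (-1) (-1).
Definition SS' := B2 F 1 (-1).
Definition E0 := \prod_(a in SS) ('X - (a + 2)%:P).
Definition E1 := \prod_(a in SS') ('X - (a + 2)%:P).
Definition D0 := E0 \Po 'X^2.
Definition D1 := E1 \Po 'X^2.

Lemma E01 : E0 * E1 = 'X^m + 1.
Proof.
rewrite -prod_nsq (reindex_inj (addIr 2)) /= (bigID (fun a => legendre (2 - a) == -1)) /=.
rewrite /E0 /E1; congr (_ * _); apply: eq_bigl => a; rewrite !inE.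
  by rewrite (addrC a 2) andbC.
rewrite (addrC a 2); case: (leg_cases (2 - a)) => h; rewrite h //=.
  move/leg0/eqP: h; rewrite subr_eq0 => /eqP <-.
  by rewrite -natrD four_eq leg_sq ?two_neq0.
by rewrite andbT. by rewrite andbF.
Qed.

Lemma D01 : D0 * D1 = 'X^(m * 2) + 1.
Proof.
by rewrite /D0 /D1 -comp_polyM E01 comp_polyD rmorphXn /= comp_polyX comp_polyC -exprM mulnC.
Qed.

Lemma D0E : D0 = \prod_(a in SS) ('X^2 - (a + 2)%:P).
Proof.
by rewrite /D0 /E0 rmorph_prod /=; apply: eq_bigr => a _; rewrite comp_polyB comp_polyX comp_polyC.
Qed.

Lemma D1E : D1 = \prod_(a in SS') ('X^2 - (a + 2)%:P).
Proof.
by rewrite /D1 /E1 rmorph_prod /=; apply: eq_bigr => a _; rewrite comp_polyB comp_polyX comp_polyC.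
Qed.

Lemma alphaq : ('X + 2 : {poly F}) ^+ #|F| = 'X^#|F| + 2.
Proof. by have := frobXC 2; rewrite (rmorph_nat polyC 2). Qed.

Lemma betaq : (2 - 'X : {poly F}) ^+ #|F| = 2 - 'X^#|F|.
Proof.
have := frobXC (-2); rewrite polyCN (rmorph_nat polyC 2) => h.
have -> : (2 - 'X : {poly F}) = - ('X + - 2) by rewrite opprD opprK addrC.
by rewrite exprNn h -signr_odd hodd expr1; ring.
Qed.

Lemma Xq : ('X^#|F| : {poly F}) = 'X * 'X^(m * 2).
Proof. by rewrite {1}card_eq exprS. Qed.

Lemma Xq1 : ('X^#|F| * 'X : {poly F}) = ('X^2) ^+ m.+1.
Proof. rewrite Xq -exprS -exprSr -exprM; congr (_ ^+ _); rewrite mulnC mulSn; lia. Qed.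


Definition Al : {poly F} := ('X + 2) ^+ m.+1.
Definition Bl : {poly F} := (2 - 'X) ^+ m.+1.

Lemma mm : (m.+1 + m.+1)%N = #|F|.+1.
Proof. rewrite [in RHS]card_eq; lia. Qed.

Lemma hAA : Al * Al = ('X^#|F| + 2) * ('X + 2).
Proof. by rewrite /Al -exprD mm exprSr alphaq. Qed.

Lemma hBB : Bl * Bl = (2 - 'X^#|F|) * (2 - 'X).
Proof. by rewrite /Bl -exprD mm exprSr betaq. Qed.

Lemma hAB : Al * Bl = (4 - 'X^2) ^+ m.+1.
Proof. rewrite /Al /Bl -exprMn; congr (_ ^+ _); rewrite -[4]/(2 * 2)%:R natrM; ring. Qed.

Lemma ZpZm : (Al + Bl) * (Al - Bl) = 4 * ('X * (D0 * D1)).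
Proof.
have -> : (Al + Bl) * (Al - Bl) = Al * Al - Bl * Bl by ring.
rewrite hAA hBB D01 Xq; set t := 'X^(m * 2).
rewrite -[4]/(2 * 2)%:R natrM; ring.
Qed.

Lemma Zp2 : (Al + Bl) ^+ 2 = 2 * ('X^2) ^+ m.+1 + 8 + 2 * (4 - 'X^2) ^+ m.+1.
Proof.
have -> : (Al + Bl) ^+ 2 = Al * Al + Bl * Bl + 2 * (Al * Bl) by ring.
rewrite hAA hBB hAB -Xq1; set t := 'X^#|F|; set u := (4 - _) ^+ _.
rewrite -[8]/(2 * 2 * 2)%:R !natrM; ring.
Qed.

Lemma Zm2 : (Al - Bl) ^+ 2 = 2 * ('X^2) ^+ m.+1 + 8 + 2 * (-1) * (4 - 'X^2) ^+ m.+1.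
Proof.
have -> : (Al - Bl) ^+ 2 = Al * Al + Bl * Bl - 2 * (Al * Bl) by ring.
rewrite hAA hBB hAB -Xq1; set t := 'X^#|F|; set u := (4 - _) ^+ _.
rewrite -[8]/(2 * 2 * 2)%:R !natrM; ring.
Qed.


Lemma dvd_key (n e : F) : n ^+ m = -1 -> (4 - n) ^+ m * e = -1 ->
  ('X^2 - n%:P) %| 2 * ('X^2) ^+ m.+1 + 8 + 2 * e%:P * (4 - 'X^2) ^+ m.+1.
Proof.
move=> hn he; set P := 'X^2 - n%:P.
have h1 : P %| ('X^2) ^+ m.+1 - (n%:P) ^+ m.+1 by rewrite subrXX dvdp_mulr.
have h2 : P %| (4 - 'X^2) ^+ m.+1 - ((4 - n)%:P) ^+ m.+1.
  rewrite subrXX; apply: dvdp_mulr.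
  have -> : 4 - 'X^2 - (4 - n)%:P = -1 * P.
    by rewrite /P polyCB (rmorph_nat polyC 4); ring.
  exact: dvdp_mull.
have hs : 2 * n ^+ m.+1 + 8 + 2 * e * (4 - n) ^+ m.+1 = 0.
  have -> : 2 * n ^+ m.+1 + 8 + 2 * e * (4 - n) ^+ m.+1 =
            2 * n * n ^+ m + 8 + 2 * (4 - n) * ((4 - n) ^+ m * e).
    by rewrite !exprS; ring.
  by rewrite hn he; ring.
have hc : 2 * (n%:P) ^+ m.+1 + 8 + 2 * e%:P * ((4 - n)%:P) ^+ m.+1 = 0.
  rewrite -!rmorphXn -(rmorph_nat polyC 2) -(rmorph_nat polyC 8) -!polyCM -!polyCD.
  by rewrite hs.
have -> : 2 * ('X^2) ^+ m.+1 + 8 + 2 * e%:P * (4 - 'X^2) ^+ m.+1 =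
   2 * (('X^2) ^+ m.+1 - (n%:P) ^+ m.+1) +
   2 * e%:P * ((4 - 'X^2) ^+ m.+1 - ((4 - n)%:P) ^+ m.+1) +
   (2 * (n%:P) ^+ m.+1 + 8 + 2 * e%:P * ((4 - n)%:P) ^+ m.+1).
  ring.
by rewrite hc addr0 dvdp_add // dvdp_mull.
Qed.

Lemma dvd_sq (n : F) (W : {poly F}) : legendre n = -1 ->
  ('X^2 - n%:P) %| W ^+ 2 -> ('X^2 - n%:P) %| W.
Proof.
move=> hn hW; set P := 'X^2 - n%:P.
have irr : irreducible_poly P.
  apply: cubic_irreducible; first by rewrite size_XnsubC.
  move=> x; apply/negP; rewrite rootE !hornerE subr_eq0 => /eqP hx.
  have x0 : x != 0.
    apply/negP => /eqP x0; move: hn; rewrite -hx x0 expr0n /= => /legm1.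
    by rewrite expr0n eqn0Ngt m_gt0 /= => /eqP; rewrite eq_sym oppr_eq0 oner_eq0.
  by have := leg_sq x0; rewrite hx hn => h; inversion h.
case hd : (P %| W) => //.
have cop : coprimep P W by rewrite irreducible_poly_coprime // hd.
by move: hW; rewrite expr2 Gauss_dvdpl // hd.
Qed.

Lemma coprime_prod (f : F -> {poly F}) (p : {poly F}) (s : seq F) :
  (forall b, b \in s -> coprimep p (f b)) -> coprimep p (\prod_(b <- s) f b).
Proof.
elim: s => [|a s IH] h; first by rewrite big_nil coprimep1.
rewrite big_cons coprimepMr h ?mem_head //=; apply: IH => b hb.
by apply: h; rewrite inE hb orbT.
Qed.

Lemma dvd_prod (f : F -> {poly F}) (W : {poly F}) (s : seq F) : uniq s ->
  (forall a, a \in s -> f a %| W) ->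
  (forall a b, a \in s -> b \in s -> a != b -> coprimep (f a) (f b)) ->
  \prod_(a <- s) f a %| W.
Proof.
elim: s => [|a s IH] /=; first by rewrite big_nil dvd1p.
move=> /andP[ha us] hd hc; rewrite big_cons Gauss_dvdp.
  rewrite hd ?mem_head //=; apply: IH => // [b hb|b c hb hc' bc].
    by apply: hd; rewrite inE hb orbT.
  by apply: hc; rewrite ?inE ?hb ?hc' ?orbT.
apply: coprime_prod => b hb; apply: hc; rewrite ?inE ?hb ?eqxx ?orbT //.
by apply: contraNneq ha => ->.
Qed.

Lemma copX2 (u v : F) : u != v -> coprimep ('X^2 - u%:P) ('X^2 - v%:P).
Proof.
move=> uv.
have -> : 'X^2 - v%:P = 1 * ('X^2 - u%:P) + (u - v)%:P by rewrite polyCB; ring.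
by rewrite coprimep_addl_mul -[(u - v)%:P]alg_polyC coprimepZr ?coprimep1 // subr_eq0.
Qed.

Lemma D0_dvd : D0 %| Al + Bl.
Proof.
rewrite D0E -big_enum; apply: dvd_prod; first exact: enum_uniq.
  move=> a; rewrite mem_enum inE => /andP[/eqP h1 /eqP h2].
  apply: dvd_sq; first by rewrite addrC.
  rewrite Zp2 (_ : (2 : {poly F}) * (4 - 'X^2) ^+ m.+1 = 2 * 1%:P * (4 - 'X^2) ^+ m.+1); last by rewrite polyC1 mulr1.
  apply: dvd_key.
    by apply/legm1; rewrite addrC.
  have -> : (4 - (a + 2) : F) = 2 - a by rewrite -[4]/(2 + 2)%:R natrD; ring.
  by rewrite mulr1; apply/legm1.
move=> a b _ _ ab; apply: copX2; by rewrite (inj_eq (addIr 2)).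
Qed.

Lemma D1_dvd : D1 %| Al - Bl.
Proof.
rewrite D1E -big_enum; apply: dvd_prod; first exact: enum_uniq.
  move=> a; rewrite mem_enum inE => /andP[/eqP h1 /eqP h2].
  apply: dvd_sq; first by rewrite addrC.
  rewrite Zm2 (_ : (2 : {poly F}) * -1 = 2 * (-1)%:P); last by rewrite polyCN polyC1.
  apply: dvd_key.
    by apply/legm1; rewrite addrC.
  have -> : (4 - (a + 2) : F) = 2 - a by rewrite -[4]/(2 + 2)%:R natrD; ring.
  by rewrite mulrN1; move/leg1: h1 => ->.
move=> a b _ _ ab; apply: copX2; by rewrite (inj_eq (addIr 2)).
Qed.


Lemma D0_monic : D0 \is monic.
Proof. by rewrite D0E; apply: monic_prod => a _; apply: monicXnsubC. Qed.
Lemma D1_monic : D1 \is monic.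
Proof. by rewrite D1E; apply: monic_prod => a _; apply: monicXnsubC. Qed.

Lemma size_D (E : {poly F}) : E \Po 'X^2 != 0 ->
  exists x, size (E \Po 'X^2) = (x * 2).+1.
Proof.
move=> nz; exists (size E).-1; have := size_comp_poly E 'X^2.
rewrite size_polyXn /= => <-; rewrite prednK // size_poly_gt0 //.
Qed.

Lemma Zp_eq : Al + Bl = 2 * D0.
Proof.
have [K1 h1] := dvdpP _ _ D0_dvd.
have [K2 h2] := dvdpP _ _ D1_dvd.
have nzD : D0 * D1 != 0.
  by rewrite D01 monic_neq0 // monicXnaddC // muln_gt0 m_gt0.
have hK : K1 * K2 = 4 * 'X.
  apply: (mulIf nzD); transitivity ((Al + Bl) * (Al - Bl)); first by rewrite h1 h2; ring.
  by rewrite ZpZm; ring.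
have h0 : (Al + Bl).[0] != 0.
  have -> : (Al + Bl).[0] = 2 * 2 ^+ m.+1.
    by rewrite /Al /Bl !hornerE subr0 -mulr2n; set t := _ ^+ _; ring.
  by rewrite mulf_neq0 ?expf_neq0 ?two_neq0.
have hK10 : K1.[0] != 0.
  by apply: contraNneq h0; rewrite h1 hornerM => ->; rewrite mul0r.
have hK20 : K2.[0] = 0.
  have := congr1 (fun p => p.[0]) hK; rewrite /= !hornerE => /eqP.
  by rewrite mulf_eq0 (negPf hK10) /= => /eqP.
have h4X : (4 * 'X : {poly F}) != 0.
  by rewrite mulf_neq0 ?polyX_eq0 // -(rmorph_nat polyC 4) polyC_eq0 four_neq0.
have K1n0 : K1 != 0 by apply: contra_neq h4X => e; rewrite -hK e mul0r.
have K2n0 : K2 != 0 by apply: contra_neq h4X => e; rewrite -hK e mulr0.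
have s4X : size (4 * 'X : {poly F}) = 2%N.
  by rewrite -(rmorph_nat polyC 4) size_Cmul ?four_neq0 // size_polyX.
have sK2 : size K2 != 1%N.
  apply/negP => /size_poly1P [c c0 hc]; move: hK20; rewrite hc hornerC => e.
  by rewrite e eqxx in c0.
have sK : size K1 = 1%N.
  move: (size_mul K1n0 K2n0); rewrite hK s4X.
  move: (size_poly_gt0 K1) (size_poly_gt0 K2) sK2; rewrite K1n0 K2n0.
  move=> /= ha hb hc hd; move: hd hc ha hb.
  case: (size K1) => [|[|a]] //; case: (size K2) => [|[|[|b]]] //=; rewrite ?addnS //=.
case/eqP/size_poly1P: sK => k k0 hk.
have hK2 : K2 = (k^-1 * 4)%:P * 'X.
  have kP : k%:P != 0 by rewrite polyC_eq0.
  by apply: (mulfI kP); rewrite mulrA -polyCM mulrA mulfV // mul1r (rmorph_nat polyC 4) -hK hk.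
have e2 : 2 * Al = k%:P * D0 + (k^-1 * 4)%:P * ('X * D1).
  transitivity ((Al + Bl) + (Al - Bl)); first by ring.
  by rewrite h1 h2 hk hK2; ring.
have lA : lead_coef (2 * Al) = 2.
  rewrite -(rmorph_nat polyC 2) lead_coefM lead_coefC (monicP _) ?mulr1 //.
  by rewrite /Al monic_exp // -(rmorph_nat polyC 2) monicXaddC.
have D0n0 : D0 != 0 by apply: monic_neq0; apply: D0_monic.
have D1n0 : D1 != 0 by apply: monic_neq0; apply: D1_monic.
have [x sx] := size_D D0n0.
have [y sy] := size_D D1n0.
have kinv0 : k^-1 * 4 != 0 by rewrite mulf_neq0 ?invr_eq0 ?four_neq0.
have s1 : size (k%:P * D0) = (x * 2).+1 by rewrite size_Cmul // -sx.
have s2 : size ((k^-1 * 4)%:P * ('X * D1)) = (y * 2).+2.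
  by rewrite size_Cmul // mulrC size_mulX // -sy.
have l1 : lead_coef (k%:P * D0) = k.
  by rewrite lead_coefM lead_coefC (monicP D0_monic) mulr1.
have l2 : lead_coef ((k^-1 * 4)%:P * ('X * D1)) = k^-1 * 4.
  by rewrite !lead_coefM lead_coefC lead_coefX (monicP D1_monic) !mulr1.
have k2 : k = 2.
  move: s1 s2 l1 l2 e2; set PA := k%:P * D0; set PB := (k^-1 * 4)%:P * ('X * D1).
  move=> s1 s2 l1 l2 e2.
  have [lt|gt] : (size PB < size PA)%N \/ (size PA < size PB)%N.
    rewrite s1 s2; case: (ltngtP (y * 2).+2 (x * 2).+1) => h; [by left|by right|].
    by exfalso; move: h => /(congr1 odd); rewrite /= !oddM /= !andbF.
  - by move: lA; rewrite e2 lead_coefDl // l1.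
  - move: lA; rewrite e2 addrC lead_coefDl // l2 => e.
    have : k * (k^-1 * 4) = k * 2 by rewrite e.
    rewrite mulrA mulfV // mul1r => e'; apply: (mulIf two_neq0).
    by rewrite -e' -[4]/(2 * 2)%:R natrM.
by rewrite h1 hk k2 (rmorph_nat polyC 2) mulrC.
Qed.

Lemma keyF (s : F) :
  2 * \prod_(a in SS) (s ^+ 2 - 2 - a) = (s + 2) ^+ m.+1 + (2 - s) ^+ m.+1.
Proof.
have e a : ('X^2 - (a + 2)%:P).[s] = s ^+ 2 - 2 - a.
  by rewrite hornerD hornerN hornerC hornerXn; ring.
have := congr1 (fun p => p.[s]) Zp_eq; rewrite /= /Al /Bl D0E.
rewrite hornerM horner_prod (eq_bigr _ (fun a _ => e a)) => h.
have h2 : (2 : {poly F}).[s] = 2 by rewrite -(rmorph_nat polyC 2) hornerC.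
rewrite h2 in h.
rewrite -h hornerD !horner_exp !hornerD hornerN hornerX.
by rewrite -polyC1 hornerC.
Qed.


Definition PP (c : F) := \prod_(a in SS) (c - a).

Lemma KF (s c : F) : s ^+ 2 = c + 2 ->
  2 * PP c = (s + 2) * (s + 2) ^+ m + (2 - s) * (2 - s) ^+ m.
Proof.
move=> hs; rewrite /PP -!exprS -keyF hs; congr (_ * _); apply: eq_bigr => a _.
by congr (_ - _); ring.
Qed.

Lemma Psym (c : F) : PP c = (-1) ^+ #|SS| * PP (- c).
Proof.
rewrite /PP (reindex_inj oppr_inj) /=.
rewrite (eq_bigl (fun a => a \in SS)); last first.
  by move=> a; rewrite !inE opprK andbC.
rewrite -prodr_const -big_split /=; apply: eq_bigr => a _; ring.
Qed.

Lemma chiprod (s c : F) : s ^+ 2 = c + 2 -> (s + 2) ^+ m * (2 - s) ^+ m = (2 - c) ^+ m.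
Proof.
move=> hs; rewrite -exprMn; congr (_ ^+ _).
have -> : (s + 2) * (2 - s) = 4 - s ^+ 2 by rewrite -[4]/(2 + 2)%:R natrD; ring.
by rewrite hs -[4]/(2 + 2)%:R natrD; ring.
Qed.

Lemma pm1_nz (x : F) : x ^+ m = 1 \/ x ^+ m = -1 -> x != 0.
Proof.
case=> h; apply/negP => /eqP x0; move: h; rewrite x0 expr0n eqn0Ngt m_gt0 /= => /eqP.
  by rewrite eq_sym oner_eq0.
by rewrite eq_sym oppr_eq0 oner_eq0.
Qed.

Lemma other (u v w : F) : u * v = w -> w ^+ 2 = 1 -> u ^+ 2 = 1 -> v = u * w.
Proof.
move=> huv hw hu; rewrite -huv mulrA -expr2 hu mul1r //.
Qed.

Lemma sq_pm1 (x : F) : x = 1 \/ x = -1 -> x ^+ 2 = 1.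
Proof. by case=> ->; rewrite ?expr1n ?sqrrN ?expr1n. Qed.

Lemma P2 : PP 2 = 2.
Proof.
have hs : (2 : F) ^+ 2 = 2 + 2 by rewrite -four_eq -[4]/(2 + 2)%:R natrD.
have := KF hs; rewrite subrr expr0n eqn0Ngt m_gt0 /= mulr0 addr0.
have -> : (2 + 2 : F) = 2 ^+ 2 by rewrite -four_eq -[4]/(2 + 2)%:R natrD.
rewrite (sq_expm (erefl _)) ?expf_neq0 ?two_neq0 // mulr1 => h.
by apply: (mulfI two_neq0); rewrite h.
Qed.

Lemma Pm2 : PP (-2) = 2 ^+ m * 2.
Proof.
have hs : (0 : F) ^+ 2 = -2 + 2 by rewrite expr0n addNr.
have := KF hs; rewrite add0r subr0 => h; apply: (mulfI two_neq0); rewrite h; ring.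
Qed.

Lemma sign_SS : (-1) ^+ #|SS| = 2 ^+ m :> F.
Proof.
have := Psym 2; rewrite P2 Pm2 => h; apply: (mulIf two_neq0).
have sq : ((-1) ^+ #|SS|) ^+ 2 = 1 :> F by rewrite -exprM mulnC exprM sqrrN expr1n expr1n.
by rewrite {1}h mulrA -expr2 sq mul1r.
Qed.

End S.


Lemma nz_of (F : finFieldType) (hodd : odd #|F|) (x y : F) (e : F) :
  x ^+ (#|F|./2) * y = e -> e != 0 -> x != 0.
Proof.
move=> h e0; apply/negP => /eqP x0; move: h; rewrite x0 expr0n eqn0Ngt m_gt0 //= mul0r.
by move=> h; rewrite -h eqxx in e0.
Qed.

Unset Implicit Arguments.

Theorem theorem7p2 (F : finFieldType) (hodd : odd #|F|) (c : F) :
  let P := \prod_(a in B2 F (-1) (-1)) (c - a) in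
  (c = 2 -> P = 2) /\
      (c = -2 -> P = (legendre (2 : F))%:~R * 2) /\
      (c \in B2 F (-1) 1 ->
        (exists s : F, s ^+ 2 = c + 2 /\ legendre (s + 2) = 1) /\
        (forall s : F, s ^+ 2 = c + 2 -> legendre (s + 2) = 1 -> P = s)) /\
      (c \in B2 F 1 (-1) ->
        (exists s : F, s ^+ 2 = 2 - c /\ legendre (s + 2) = -1) /\
        (forall s : F, s ^+ 2 = 2 - c -> legendre (s + 2) = -1 ->
           P = - ((legendre (2 : F))%:~R * s))) /\
      (c \in B2 F 1 1 ->
        (exists s : F, s ^+ 2 = c + 2) /\
        (forall s : F, s ^+ 2 = c + 2 ->
           [/\ s \in B2 F 1 1 -> P = 2,
               s \notin B2 F 1 1 -> P = -2 &
               (s \in B2 F 1 1 /\ - s \in B2 F 1 1) \/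
               (s \in B2 F (-1) (-1) /\ - s \in B2 F (-1) (-1))])) /\
      (c \in B2 F (-1) (-1) -> P = 0).
Proof.
move=> P; rewrite /P -[\prod_(a in _) _]/(PP c).
have m0 := m_gt0 hodd.
have t0 := two_neq0 hodd.
have o1 := one_neq_m1 hodd.
have m1n0 : (-1 : F) != 0 by rewrite oppr_eq0 oner_eq0.
split; first by move=> ->; apply: P2.
split; first by move=> ->; rewrite Pm2 // legE.
split.
  rewrite inE => /andP[/eqP h1 /eqP h2].
  have [b hb] := expm_sq hodd ((leg1 hodd _).1 h2).
  have hb' : b ^+ 2 = c + 2 by rewrite hb addrC.
  have hp := chiprod hb'; rewrite ((legm1 hodd _).1 h1) in hp.
  split.
    have bz := nz_of hodd hp m1n0.
    case: (expm_pm1 hodd bz) => e.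
      by exists b; split => //; apply/leg1.
    exists (-b); split; first by rewrite sqrrN.
    apply/leg1 => //; rewrite addrC; move: hp; rewrite e mulN1r => /eqP.
    by rewrite eqr_opp => /eqP.
  move=> s hs hl; have hp' := chiprod hs.
  rewrite ((legm1 hodd _).1 h1) ((leg1 hodd _).1 hl) mul1r in hp'.
  have := KF hodd hs; rewrite ((leg1 hodd _).1 hl) hp' => h.
  by apply: (mulfI t0); rewrite h; ring.
split.
  rewrite inE => /andP[/eqP h1 /eqP h2].
  have [b hb] := expm_sq hodd ((leg1 hodd _).1 h1).
  have hb' : b ^+ 2 = - c + 2 by rewrite hb addrC.
  have hp := chiprod hb'; rewrite opprK ((legm1 hodd _).1 h2) in hp.
  split.
    have bz := nz_of hodd hp m1n0.
    case: (expm_pm1 hodd bz) => e.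
      exists (-b); split; first by rewrite sqrrN.
      apply/legm1 => //; rewrite addrC; move: hp; rewrite e mul1r //.
    by exists b; split => //; apply/legm1.
  move=> s hs hl.
  have hs' : s ^+ 2 = - c + 2 by rewrite hs addrC.
  have hp' := chiprod hs'.
  rewrite opprK ((legm1 hodd _).1 h2) ((legm1 hodd _).1 hl) mulN1r in hp'.
  have hp'' : (2 - s) ^+ (#|F|./2) = 1 by move/eqP: hp'; rewrite eqr_opp => /eqP.
  have := KF hodd hs'; rewrite ((legm1 hodd _).1 hl) hp'' => h.
  rewrite Psym // sign_SS // -legE //.
  have -> : PP (- c) = - s by apply: (mulfI t0); rewrite h; ring.
  ring.
split.
  rewrite inE => /andP[/eqP h1 /eqP h2].
  split.
    have [b hb] := expm_sq hodd ((leg1 hodd _).1 h2).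
    by exists b; rewrite hb addrC.
  move=> s hs; have hp := chiprod hs; rewrite ((leg1 hodd _).1 h1) in hp.
  have sz := nz_of hodd hp (oner_neq0 _).
  have hK := KF hodd hs.
  case: (expm_pm1 hodd sz) => e.
    have f : (2 - s) ^+ (#|F|./2) = 1 by move: hp; rewrite e mul1r.
    have hP : PP c = 2.
      apply: (mulfI t0); rewrite hK e f; ring.
    have i1 : s \in B2 F 1 1.
      by rewrite inE; apply/andP; split; apply/eqP/leg1 => //; rewrite addrC.
    split => //; first by rewrite i1.
    left; split => //; rewrite inE opprK; apply/andP; split; apply/eqP/leg1 => //.
    by rewrite addrC.
  have f : (2 - s) ^+ (#|F|./2) = -1.
    by move: hp; rewrite e mulN1r => /eqP; rewrite -eqr_opp opprK => /eqP.
  have hP : PP c = - 2.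
    by apply: (mulfI t0); rewrite hK e f; ring.
  have i1 : s \in B2 F (-1) (-1).
    by rewrite inE; apply/andP; split; apply/eqP/legm1 => //; rewrite addrC.
  split => //.
    rewrite inE => /andP[/eqP /(leg1 hodd _).1]; rewrite f => /eqP.
    by rewrite eq_sym (negPf o1).
  right; split => //; rewrite inE opprK; apply/andP; split; apply/eqP/legm1 => //.
  by rewrite addrC.
by move=> hc; rewrite /PP (bigD1 c) //= subrr mul0r.
Qed.
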